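(* Assume Schinzel's Hypothesis H. Then $j(a_n)>1$ for infinitely many $n$; equivalently, there are infinitely many $n\ge 2$ such that $a_n-a_{n-1}\notin A$.
   Context: Let $A$ be the set of positive integers $a$ such that $a^2+1$ is prime, and enumerate it in increasing order as $A=\{a_1<a_2<a_3<\cdots\}$ (so $a_1=1,a_2=2,a_3=4,\dots$). For $n\ge 2$, $j(a_n)$ denotes the smallest index $i$ with $1\le i\le n-1$ such that $a_n-a_{n-i}\in A$ (i.e. $a_n-a_{n-i}=a_k$ for some $k$). A finite set of polynomials $f_1,\dots,f_r\in\mathbb{Z}[x]$ satisfies the Bunyakovsky condition if there is no prime $p$ such that $\prod_i f_i(a)\equiv 0 \pmod p$ for all $a\in\mathbb{F}_p$. Schinzel's Hypothesis H: if $f_1,\dots,f_r\in\mathbb{Z}[x]$ are irreducible polynomials with positive leading coefficients satisfying the Bunyakovsky condition, then there are infinitely many positive integers $x$ for which $f_1(x),\dots,f_r(x)$ are all prime. *)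

(* Defs.v *)
From mathcomp Require Import all_boot all_order all_algebra.
Set Implicit Arguments. Unset Strict Implicit. Unset Printing Implicit Defensive.
Import Order.TTheory GRing.Theory Num.Theory.
Local Open Scope ring_scope.

Definition inA (a : nat) : bool := (0 < a)%N && prime (a ^ 2 + 1).

Definition countA (x : nat) : nat := count inA (iota 1 x).

(* nthA n x  <->  x = a_n, the n-th element (1-indexed) of A in increasing order. *)
Definition nthA (n x : nat) : Prop := inA x /\ countA x = n.

Definition primez (z : int) : Prop := exists p : nat, prime p /\ z = p%:Z.

Definition irreducibleZ (f : {poly int}) : Prop :=
  f != 0 /\ f \isn't a GRing.unit /\
  forall g h : {poly int}, f = g * h -> g \is a GRing.unit \/ h \is a GRing.unit.

(* Bunyakovsky condition: no prime p with p | prod_i f_i(a) for every a in F_p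
   (a ranging over the representatives 0..p-1). *)
Definition bunyakovsky (fs : seq {poly int}) : Prop :=
  ~ exists p : nat, prime p /\
      forall a : nat, (a < p)%N -> (p%:Z %| \prod_(f <- fs) f.[a%:Z])%Z.

Definition SchinzelH : Prop :=
  forall fs : seq {poly int},
    (forall f, f \in fs -> irreducibleZ f) ->
    (forall f, f \in fs -> 0 < lead_coef f) ->
    bunyakovsky fs ->
    forall N : nat, exists x : nat, (N < x)%N /\ forall f, f \in fs -> primez f.[x%:Z].

(* Main.v *)
Require Import Defs.
From mathcomp Require Import all_boot all_order all_algebra.
From mathcomp Require Import zify ring lra.
Import Order.TTheory GRing.Theory Num.Theory.
Local Open Scope ring_scope.

Lemma lin_eval (p : {poly int}) x : size p = 2%N -> p.[x] = p`_0 + p`_1 * x.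
Proof.
move=> sp; rewrite horner_coef sp !big_ord_recl big_ord0 /=.
by rewrite expr0 expr1 mulr1 addr0.
Qed.

Lemma abs1_unit (c : int) : `|c|%N = 1%N -> c \is a GRing.unit.
Proof.
move=> h; have : c = 1 \/ c = -1 by lia.
by case=> ->; [exact: unitr1 | exact: unitrN1].
Qed.

Lemma const_unit (g h f : {poly int}) :
  f = g * h -> size g = 1%N ->
  (forall c : int, (c %| f.[0])%Z -> (c %| f.[1])%Z -> `|c|%N = 1%N) ->
  g \is a GRing.unit.
Proof.
move=> fgh sg hc; rewrite poly_unitE sg eqxx /=.
have gE := size1_polyC (eq_leq sg).
apply: abs1_unit; apply: hc; rewrite fgh gE hornerM hornerC coefC /=; exact: (dvdz_mulr _ (dvdzz _)).
Qed.

Lemma quad_irr (f : {poly int}) :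
  size f = 3%N ->
  (forall c : int, (c %| f.[0])%Z -> (c %| f.[1])%Z -> `|c|%N = 1%N) ->
  (f.[1] - f.[-1])^+2 < 8 * (f.[1] + f.[-1] - 2 * f.[0]) * f.[0] ->
  irreducibleZ f.
Proof.
move=> sf hc hd; split; first by rewrite -size_poly_eq0 sf.
split; first by rewrite poly_unitE sf.
move=> g h fgh.
have f0 : f != 0 by rewrite -size_poly_eq0 sf.
have g0 : g != 0 by apply: contraNneq f0; rewrite fgh => ->; rewrite mul0r.
have h0 : h != 0 by apply: contraNneq f0; rewrite fgh => ->; rewrite mulr0.
have := size_mul g0 h0; rewrite -fgh sf => ssum.
have sg : (0 < size g)%N by rewrite size_poly_gt0.
have sh : (0 < size h)%N by rewrite size_poly_gt0.
have [sg1|sg1] := eqVneq (size g) 1%N; first by left; exact: const_unit fgh sg1 hc.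
have [sh1|sh1] := eqVneq (size h) 1%N.
  by right; apply: (@const_unit h g f) => //; rewrite fgh mulrC.
exfalso.
have ss4 : (size g + size h = 4)%N by move: ssum; case: (size g + size h)%N => // k /= <-.
have sg2 : size g = 2%N by lia.
have sh2 : size h = 2%N by lia.
have e0 : f.[0] = g.[0] * h.[0] by rewrite fgh hornerM.
have e1 : f.[1] = g.[1] * h.[1] by rewrite fgh hornerM.
have em : f.[-1] = g.[-1] * h.[-1] by rewrite fgh hornerM.
have gl := fun x => @lin_eval g x sg2. have hl := fun x => @lin_eval h x sh2.
move: hd; rewrite e0 e1 em !gl !hl.
set a := g`_0; set b := g`_1; set c := h`_0; set d := h`_1.
move=> hd.
have sq : 0 <= (a * d - b * c) ^+ 2 by rewrite sqr_ge0.
clearbody a b c d; clear -hd sq; nra.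
Qed.

Fact f1_key : unit. Proof. exact: tt. Qed.
Fact f2_key : unit. Proof. exact: tt. Qed.
Definition f1 : {poly int} := locked_with f1_key (Poly [:: 4357; 17160; 16900]).
Definition f2 : {poly int} := locked_with f2_key (Poly [:: 5477; 19240; 16900]).
Lemma f1D : f1 = Poly [:: 4357; 17160; 16900]. Proof. by rewrite /f1 unlock. Qed.
Lemma f2D : f2 = Poly [:: 5477; 19240; 16900]. Proof. by rewrite /f2 unlock. Qed.

Lemma f1E t : f1.[t] = (130 * t + 66) ^+ 2 + 1.
Proof. rewrite f1D horner_Poly /=; ring. Qed.
Lemma f2E t : f2.[t] = (130 * t + 74) ^+ 2 + 1.
Proof. rewrite f2D horner_Poly /=; ring. Qed.

Lemma f1s : size f1 = 3%N.
Proof. by rewrite f1D (@PolyK _ 0). Qed.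
Lemma f2s : size f2 = 3%N.
Proof. by rewrite f2D (@PolyK _ 0). Qed.

Lemma f1l : 0 < lead_coef f1.
Proof. by rewrite lead_coefE f1s f1D (@PolyK _ 0). Qed.
Lemma f2l : 0 < lead_coef f2.
Proof. by rewrite lead_coefE f2s f2D (@PolyK _ 0). Qed.

Lemma f1v (t : nat) : f1.[t%:Z] = ((130 * t + 66) ^ 2 + 1)%N%:Z.
Proof. rewrite f1E. lia. Qed.
Lemma f2v (t : nat) : f2.[t%:Z] = ((130 * t + 74) ^ 2 + 1)%N%:Z.
Proof. rewrite f2E. lia. Qed.

Lemma gcd_cond (a b : int) (n m : nat) : a = n%:Z -> b = m%:Z -> gcdn n m = 1%N ->
  forall c : int, (c %| a)%Z -> (c %| b)%Z -> `|c|%N = 1%N.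
Proof.
move=> -> -> g c; rewrite !dvdzE /= => h1 h2.
have : (`|c| %| gcdn n m)%N by rewrite dvdn_gcd h1 h2.
by rewrite g dvdn1 => /eqP.
Qed.

Lemma f1irr : irreducibleZ f1.
Proof.
apply: quad_irr f1s _ _.
  apply: (@gcd_cond _ _ 4357 38417); rewrite ?f1E //.
rewrite !f1E. lia.
Qed.
Lemma f2irr : irreducibleZ f2.
Proof.
apply: quad_irr f2s _ _.
  apply: (@gcd_cond _ _ 5477 41617); rewrite ?f2E //.
rewrite !f2E. lia.
Qed.

Lemma bun_aux (p a b c d : nat) : prime p ->
  gcdn a c = 1%N -> gcdn a d = 1%N -> gcdn b c = 1%N -> gcdn b d = 1%N ->
  (p%:Z %| a%:Z * b%:Z)%Z -> (p%:Z %| c%:Z * d%:Z)%Z -> False.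
Proof.
move=> pp gac gad gbc gbd; rewrite -!PoszM !dvdzE !absz_nat !Euclid_dvdM //.
have p1 := prime_gt1 pp.
have gg : forall a b, gcdn a b = 1%N -> (p %| a)%N -> (p %| b)%N -> False.
  move=> x y g ha hb; have : (p %| gcdn x y)%N by rewrite dvdn_gcd ha hb.
  by rewrite g dvdn1 => /eqP pe; rewrite pe in p1.
case/orP => h0; case/orP => h1; [exact: (gg _ _ gac) | exact: (gg _ _ gad) | exact: (gg _ _ gbc) | exact: (gg _ _ gbd)].
Qed.

Lemma fbun : bunyakovsky [:: f1; f2].
Proof.
move=> [p [pp hp]].
have p1 := prime_gt1 pp.
have := hp 0%N (ltnW p1); have := hp 1%N p1.
rewrite !big_cons !big_nil !mulr1.
have -> : f1.[0%N%:Z] = 4357%N%:Z by rewrite f1E.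
have -> : f1.[1%N%:Z] = 38417%N%:Z by rewrite f1E.
have -> : f2.[0%N%:Z] = 5477%N%:Z by rewrite f2E.
have -> : f2.[1%N%:Z] = 41617%N%:Z by rewrite f2E.
move=> h1 h0; apply: (@bun_aux p 4357 5477 38417 41617 pp); [vm_compute; reflexivity..| exact: h0 | exact: h1].
Qed.

Lemma not_prime_mul (a b : nat) : (1 < a)%N -> (1 < b)%N -> ~~ prime (a * b).
Proof.
move=> a1 b1; apply/negP => /primeP [_ H].
have := H a (dvdn_mulr b (dvdnn a)); case/orP => /eqP e; nia.
Qed.

Lemma gapX t k : (0 < k < 8)%N -> ~~ inA (130 * t + 66 + k).
Proof.
case/andP; case: k => [//|[|[|[|[|[|[|[|//]]]]]]]] _ _; rewrite /inA;
  apply/negP => /andP [_]; apply/negP.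
- have -> : ((130 * t + 66 + 1) ^ 2 + 1 = 2 * (8450*t*t + 8710*t + 2245))%N by ring.
  apply: not_prime_mul => //; nia.
- have -> : ((130 * t + 66 + 2) ^ 2 + 1 = 5 * (3380*t*t + 3536*t + 925))%N by ring.
  apply: not_prime_mul => //; nia.
- have -> : ((130 * t + 66 + 3) ^ 2 + 1 = 2 * (8450*t*t + 8970*t + 2381))%N by ring.
  apply: not_prime_mul => //; nia.
- have -> : ((130 * t + 66 + 4) ^ 2 + 1 = 13 * (1300*t*t + 1400*t + 377))%N by ring.
  apply: not_prime_mul => //; nia.
- have -> : ((130 * t + 66 + 5) ^ 2 + 1 = 2 * (8450*t*t + 9230*t + 2521))%N by ring.
  apply: not_prime_mul => //; nia.
- have -> : ((130 * t + 66 + 6) ^ 2 + 1 = 5 * (3380*t*t + 3744*t + 1037))%N by ring.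
  apply: not_prime_mul => //; nia.
- have -> : ((130 * t + 66 + 7) ^ 2 + 1 = 2 * (8450*t*t + 9490*t + 2665))%N by ring.
  apply: not_prime_mul => //; nia.
Qed.

Lemma countA_split x k : countA (x + k) = (countA x + count inA (iota x.+1 k))%N.
Proof. by rewrite /countA iotaD count_cat add1n. Qed.

Lemma countA_lt x y : inA y -> (x < y)%N -> (countA x < countA y)%N.
Proof.
move=> hy xy; rewrite -(subnKC (ltnW xy)) countA_split -[X in (X < _)%N]addn0 ltn_add2l.
rewrite -has_count; apply/hasP; exists y => //.
rewrite mem_iota; apply/andP; split => //; lia.
Qed.

Lemma count8 X : (forall k, (0 < k < 8)%N -> ~~ inA (X + k)) -> inA (X + 8) ->
  count inA (iota X.+1 8) = 1%N.
Proof.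
move=> h h8; rewrite -[8%N]/(7 + 1)%N iotaD count_cat.
have -> : count inA (iota X.+1 7) = count pred0 (iota X.+1 7).
  apply: eq_in_count => y; rewrite mem_iota => /andP [y1 y2] /=.
  have -> : y = (X + (y - X))%N by lia.
  apply/negbTE/h; lia.
rewrite count_pred0 /=; have -> : (X.+1 + 7 = X + 8)%N by lia.
by rewrite h8.
Qed.

Definition Xt t := (130 * t + 66)%N.

Lemma primez_nat m : primez m%:Z -> prime m.
Proof. by case=> p [pp [->]]. Qed.

Lemma H_gives (HH : SchinzelH) M :
  exists t, (M < t)%N /\ inA (Xt t) /\ inA (Xt t + 8).
Proof.
have irr : forall f, f \in [:: f1; f2] -> irreducibleZ f.
  by move=> f; rewrite !inE => /orP [/eqP->|/eqP->]; [exact: f1irr|exact: f2irr].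
have lc : forall f, f \in [:: f1; f2] -> 0 < lead_coef f.
  by move=> f; rewrite !inE => /orP [/eqP->|/eqP->]; [exact: f1l|exact: f2l].
have [t [Mt ht]] := HH _ irr lc fbun M.
have p1 := ht f1 (mem_head _ _).
have p2 : primez f2.[t%:Z] by apply: ht; rewrite !inE eqxx orbT.
rewrite f1v in p1; rewrite f2v in p2.
exists t; split => //; rewrite /inA /Xt; split; apply/andP; split.
- lia.
- exact: primez_nat.
- lia.
- have -> : (130 * t + 66 + 8 = 130 * t + 74)%N by lia.
  exact: primez_nat.
Qed.

Lemma big_t (HH : SchinzelH) N :
  exists t, inA (Xt t) /\ inA (Xt t + 8) /\ (N <= countA (Xt t))%N.
Proof.
elim: N => [|N [t0 [_ [_ c0]]]].
  by have [t [_ [h1 h2]]] := H_gives HH 0; exists t.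
have [t [Mt [h1 h2]]] := H_gives HH (Xt t0).
exists t; split => //; split => //.
have lt : (Xt t0 < Xt t)%N by move: Mt; rewrite /Xt; lia.
have := @countA_lt _ _ h1 lt; lia.
Qed.

Local Close Scope ring_scope.

Theorem proposition1 :
  SchinzelH ->
  forall N : nat, exists n : nat, (N < n)%N /\ (2 <= n)%N /\
    exists x y : nat, nthA n x /\ nthA n.-1 y /\ ~~ inA (x - y).
Proof.
move=> HH N.
have [t [h1 [h2 c]]] := big_t HH N.
have hk : forall k, (0 < k < 8)%N -> ~~ inA (Xt t + k) by move=> k; exact: gapX.
have c8 := count8 _ hk h2.
have cE : countA (Xt t + 8) = (countA (Xt t)).+1 by rewrite countA_split c8 addn1.
have c1 : (0 < countA (Xt t))%N.
  by have := countA_lt 0 _ h1 (_ : 0 < Xt t)%N; apply; rewrite /Xt; lia.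
exists (countA (Xt t + 8)); split; first by rewrite cE; lia.
split; first by rewrite cE; lia.
exists (Xt t + 8), (Xt t); split; first by [].
split; first by rewrite cE.
by rewrite addKn.
Qed.
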